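(* Let $\mathcal{C}\subset S^{n-1}\subset\mathbb{R}^n$ be a spherical code whose angle set $\mathcal{A}_{\mathcal{C}}$ consists of rational numbers and such that $\mathcal{C}$ spans $\mathbb{R}^n$. Then there exist an integer $q\geq n$, a natural number $m$, a real number $\lambda>0$ and a linear isometric embedding $\iota:\mathbb{R}^n\to\mathbb{R}^q$ such that $\lambda\,\iota(\mathcal{C})\subseteq s_m$, where $s_m$ is the shell of squared norm $m$ of the integer lattice $\mathbb{Z}^q$.
   Context: A spherical code is a finite set of points on the unit sphere $S^{n-1}\subset\mathbb{R}^n$. Its angle set is $\mathcal{A}_{\mathcal{C}}=\{\langle x,y\rangle: x,y\in\mathcal{C},\,x\neq y\}$ (standard inner product). $\mathbb{Z}^q$ is the lattice of integer vectors in $\mathbb{R}^q$, and its shell $s_m$ is $\{v\in\mathbb{Z}^q:\|v\|^2=m\}$. *)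

(* Defs.v *)
From mathcomp Require Import all_boot all_order all_algebra.
From mathcomp Require Import reals.
Set Implicit Arguments. Unset Strict Implicit. Unset Printing Implicit Defensive.
Import Order.TTheory GRing.Theory Num.Theory.
Local Open Scope ring_scope.

Definition dotp (R : realType) (n : nat) (u v : 'rV[R]_n) : R := (u *m v^T) 0 0.

Definition on_unit_sphere (R : realType) (n : nat) (x : 'rV[R]_n) : Prop :=
  dotp x x = 1.

(* A spherical code: a finite set of points on the unit sphere (given as a
   duplicate-free list). *)
Definition spherical_code (R : realType) (n : nat) (C : seq 'rV[R]_n) : Prop :=
  uniq C /\ forall x, x \in C -> on_unit_sphere x.

Definition angle_set (R : realType) (n : nat) (C : seq 'rV[R]_n) : R -> Prop :=
  fun a => exists x y, [/\ x \in C, y \in C, x != y & a = dotp x y].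

Definition is_rational (R : realType) (a : R) : Prop := exists r : rat, a = ratr r.

Definition spans (R : realType) (n : nat) (C : seq 'rV[R]_n) : Prop :=
  row_full (\matrix_(i < size C) nth 0 C i).

Definition isometric_embedding (R : realType) (n q : nat) (M : 'M[R]_(n, q)) : Prop :=
  forall u v : 'rV[R]_n, dotp (u *m M) (v *m M) = dotp u v.

Definition in_shell (R : realType) (q m : nat) (w : 'rV[R]_q) : Prop :=
  exists z : 'rV[int]_q, w = map_mx (fun k : int => k%:~R) z /\
    \sum_(i < q) (z 0 i) ^+ 2 = m%:Z.

(* Main.v *)
Require Import Defs.
From mathcomp Require Import all_boot all_order all_algebra.
From mathcomp Require Import reals ring.
Import Order.TTheory GRing.Theory Num.Theory.
Local Open Scope ring_scope.

Section Aux.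
Variables (R : realType) (n : nat).
Implicit Types (u v w : 'rV[R]_n).

Lemma dotpE u v : dotp u v = \sum_i u 0 i * v 0 i.
Proof. by rewrite /dotp mxE; apply: eq_bigr => i _; rewrite mxE. Qed.

Lemma dotpC u v : dotp u v = dotp v u.
Proof. by rewrite !dotpE; apply: eq_bigr => i _; rewrite mulrC. Qed.

Lemma dotpDl u v w : dotp (u + v) w = dotp u w + dotp v w.
Proof. by rewrite !dotpE -big_split; apply: eq_bigr => i _; rewrite mxE mulrDl. Qed.

Lemma dotpZl a u v : dotp (a *: u) v = a * dotp u v.
Proof. by rewrite !dotpE mulr_sumr; apply: eq_bigr => i _; rewrite mxE mulrA. Qed.

Lemma dotpNl u v : dotp (- u) v = - dotp u v.
Proof. by rewrite -scaleN1r dotpZl mulN1r. Qed.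

Lemma dotpBl u v w : dotp (u - v) w = dotp u w - dotp v w.
Proof. by rewrite dotpDl dotpNl. Qed.

Lemma dotp_suml (I : Type) (s : seq I) (F : I -> 'rV[R]_n) w :
  dotp (\sum_(i <- s) F i) w = \sum_(i <- s) dotp (F i) w.
Proof.
elim: s => [|a s IH]; first by rewrite !big_nil dotpE big1 // => i _; rewrite mxE mul0r.
by rewrite !big_cons dotpDl IH.
Qed.

Lemma dotp0l w : dotp 0 w = 0.
Proof. by rewrite dotpE big1 // => i _; rewrite mxE mul0r. Qed.

Lemma mul_tr u v : u *m v^T = (dotp u v)%:M.
Proof. by rewrite [LHS]mx11_scalar. Qed.

Lemma dotp_mul (q : nat) u v (M : 'M[R]_(n, q)) :
  dotp (u *m M) (v *m M) = dotp u (v *m (M *m M^T)).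
Proof. by rewrite /dotp !trmx_mul !mulmxA trmxK. Qed.

Definition isQ (a : R) := exists r : rat, a = ratr r.

Lemma isQD a b : isQ a -> isQ b -> isQ (a + b).
Proof. by move=> [r ->] [s ->]; exists (r + s); rewrite rmorphD. Qed.
Lemma isQM a b : isQ a -> isQ b -> isQ (a * b).
Proof. by move=> [r ->] [s ->]; exists (r * s); rewrite rmorphM. Qed.
Lemma isQN a : isQ a -> isQ (- a).
Proof. by move=> [r ->]; exists (- r); rewrite rmorphN. Qed.
Lemma isQV a : isQ a -> isQ (a^-1).
Proof. by move=> [r ->]; exists (r^-1); rewrite fmorphV. Qed.
Lemma isQ1 : isQ 1.
Proof. by exists 1; rewrite rmorph1. Qed.
Lemma isQ0 : isQ 0.
Proof. by exists 0; rewrite rmorph0. Qed.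
Lemma isQ_sum (I : eqType) (s : seq I) (F : I -> R) :
  (forall i, i \in s -> isQ (F i)) -> isQ (\sum_(i <- s) F i).
Proof.
elim: s => [|a s IH] H; first by rewrite big_nil; apply: isQ0.
rewrite big_cons; apply: isQD; first by apply: H; rewrite mem_head.
by apply: IH => i Hi; apply: H; rewrite inE Hi orbT.
Qed.

Lemma dotpDr u v w : dotp u (v + w) = dotp u v + dotp u w.
Proof. by rewrite dotpC dotpDl !(dotpC u). Qed.
Lemma dotpZr a u v : dotp u (a *: v) = a * dotp u v.
Proof. by rewrite dotpC dotpZl dotpC. Qed.
Lemma dotpBr u v w : dotp u (v - w) = dotp u v - dotp u w.
Proof. by rewrite dotpC dotpBl !(dotpC u). Qed.
Lemma dotp_sumr (I : Type) (s : seq I) (F : I -> 'rV[R]_n) w :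
  dotp w (\sum_(i <- s) F i) = \sum_(i <- s) dotp w (F i).
Proof. by rewrite dotpC dotp_suml; apply: eq_bigr => i _; rewrite dotpC. Qed.

Lemma dotp_eq0 u : (dotp u u == 0) = (u == 0).
Proof.
apply/idP/idP => [|/eqP->]; last by rewrite dotp0l.
rewrite dotpE psumr_eq0; last by move=> i _; rewrite -expr2 sqr_ge0.
move=> /allP H; apply/eqP/rowP => i; rewrite mxE.
by have /(_ (mem_index_enum i)) := H i; rewrite -expr2 sqrf_eq0 => /eqP.
Qed.

Definition orth u v := dotp u v == 0.
Definition Pr (U : seq 'rV[R]_n) : 'M[R]_n :=
  \sum_(u <- U) (dotp u u)^-1 *: (u^T *m u).

Lemma xPr x U : x *m Pr U = \sum_(u <- U) (dotp x u / dotp u u) *: u.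
Proof.
rewrite /Pr mulmx_sumr; apply: eq_bigr => u _.
by rewrite -scalemxAr mulmxA mul_tr mul_scalar_mx scalerA mulrC.
Qed.

Lemma ortho_sum (U : seq 'rV[R]_n) (g : 'rV[R]_n -> R) u :
  pairwise orth U -> u \in U ->
  \sum_(u' <- U) g u' * dotp u' u = g u * dotp u u.
Proof.
elim: U => [//|a U IH]; rewrite pairwise_cons => /andP[/allP Ha HU].
rewrite inE big_cons; case: (eqVneq u a) => [->|nua] /= Hu.
  rewrite big_seq big1 ?addr0 // => v Hv.
  by have /eqP := Ha v Hv; rewrite /orth dotpC => ->; rewrite mulr0.
have /eqP := Ha u Hu; rewrite /orth => ->; rewrite mulr0 add0r.
exact: IH.
Qed.

End Aux.
Arguments isQ {R}.
Arguments orth {R n}.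
Arguments Pr {R n}.

Lemma GS (R : realType) (n : nat) (C : seq 'rV[R]_n) :
  (forall x y, x \in C -> y \in C -> isQ (dotp x y)) ->
  forall L : seq 'rV[R]_n, {subset L <= C} ->
  exists U : seq 'rV[R]_n,
    [/\ forall u, u \in U -> dotp u u != 0, pairwise orth U,
        forall u, u \in U -> isQ (dotp u u),
        forall u c, u \in U -> c \in C -> isQ (dotp c u) &
        forall y, y \in L -> y *m Pr U = y].
Proof.
move=> HQ; elim=> [|x L IH] HL.
  by exists [::]; split => //; rewrite pairwise_nil.
have [|U [Hnz Hor HQd HQc HP]] := IH.
  by move=> y Hy; apply: HL; rewrite inE Hy orbT.
have xC : x \in C by apply: HL; rewrite mem_head.
set w := x - x *m Pr U.
have Hwu : forall u, u \in U -> dotp w u = 0.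
  move=> u Hu; rewrite /w dotpBl xPr dotp_suml.
  under eq_bigr => v _ do rewrite dotpZl.
  by rewrite ortho_sum // mulfVK ?subrr // Hnz.
have HQx : forall u, u \in U -> isQ (dotp x u / dotp u u).
  by move=> u Hu; apply: isQM; [apply: HQc | apply: isQV; apply: HQd].
have HQw : forall c, c \in C -> isQ (dotp c w).
  move=> c Hc; rewrite /w dotpBr xPr dotp_sumr; apply: isQD; first exact: HQ.
  apply: isQN; apply: isQ_sum => u Hu.
  by rewrite dotpZr; apply: isQM; [apply: HQx | apply: HQc].
have HyU : forall y, y \in L -> dotp y w = 0.
  move=> y Hy; rewrite -(HP y Hy) xPr dotp_suml big_seq big1 // => u Hu.
  by rewrite dotpZl (@dotpC _ _ u w) Hwu ?mulr0.
case: (eqVneq w 0) => [w0|wn0].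
  exists U; split => // y; rewrite in_cons => /orP[/eqP->|]; last exact: HP.
  by move/eqP: w0; rewrite subr_eq0 => /eqP.
have dw : dotp w w = dotp x w.
  rewrite {1}/w dotpBl xPr dotp_suml big_seq big1 ?subr0 // => u Hu.
  by rewrite dotpZl (@dotpC _ _ u w) Hwu ?mulr0.
exists (w :: U); split.
- move=> u; rewrite in_cons => /orP[/eqP->|]; last exact: Hnz.
  by rewrite dotp_eq0.
- rewrite pairwise_cons Hor andbT; apply/allP => u Hu.
  by rewrite /orth Hwu.
- move=> u; rewrite in_cons => /orP[/eqP->|]; last exact: HQd.
  by rewrite dw; apply: HQw.
- move=> u c; rewrite in_cons => /orP[/eqP->|]; first exact: HQw.
  exact: HQc.
- move=> y; rewrite in_cons /Pr big_cons mulmxDr -/(Pr U).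
  rewrite -scalemxAr mulmxA mul_tr mul_scalar_mx scalerA.
  case/orP => [/eqP->|Hy].
    by rewrite -dw mulVf ?dotp_eq0 // scale1r /w subrK.

  by rewrite (HyU y Hy) mulr0 scale0r add0r HP.
Qed.

Lemma denom (R : realType) (S : seq R) : (forall a, a \in S -> isQ a) ->
  exists D : nat, (0 < D)%N /\ forall a, a \in S -> exists z : int, D%:R * a = z%:~R.
Proof.
elim: S => [|b S IH] H; first by exists 1%N.
have [|D [D0 HD]] := IH; first by move=> a Ha; apply: H; rewrite in_cons Ha orbT.
have [r Hr] := H b (mem_head _ _).
have dq : (`|denq r|%N%:R : R) = (denq r)%:~R.
  by rewrite natr_absz gtr0_norm // denq_gt0.
have dn : (denq r)%:~R != 0 :> R by rewrite intr_eq0 denq_neq0.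
exists (D * `|denq r|)%N; split; first by rewrite muln_gt0 D0 absz_gt0 denq_neq0.
move=> a; rewrite in_cons => /orP[/eqP->|Ha].
  exists (D%:Z * numq r); rewrite Hr /ratr.
  by rewrite natrM dq intrM -mulrA [_ * (_ / _)]mulrC mulfVK.
have [z Hz] := HD a Ha; exists (z * denq r).
by rewrite natrM dq mulrAC Hz intrM.
Qed.

Lemma span_id (R : realType) (n : nat) (C : seq 'rV[R]_n) (P : 'M[R]_n) :
  spans C -> (forall c, c \in C -> c *m P = c) -> P = 1%:M.
Proof.
move=> /row_fullP [B HB] HC.
set A := \matrix_(i < size C) nth 0 C i.
have AP : A *m P = A.
  apply/row_matrixP => i; rewrite row_mul !rowK; apply: HC.
  by rewrite mem_nth.
by rewrite -[P]mul1mx -HB -mulmxA AP.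
Qed.

Lemma sum_nseq (R : realType) (n : nat) (k : nat) (g : 'rV[R]_n) (h : 'rV[R]_n -> 'M[R]_n) :
  \sum_(f <- nseq k g) h f = h g *+ k.
Proof. by elim: k => [|k IH]; rewrite ?big_nil // big_cons IH mulrS. Qed.

Lemma buildF (R : realType) (n : nat) (t : nat) (U : seq 'rV[R]_n) :
  (0 < t)%N ->
  (forall u, u \in U -> dotp u u != 0) ->
  (forall u, u \in U -> exists k : nat, k%:R = dotp u u * t%:R ^+ 2) ->
  exists F : seq 'rV[R]_n,
    \sum_(f <- F) f^T *m f = Pr U /\
    forall f, f \in F -> exists2 u, u \in U & f = (dotp u u * t%:R)^-1 *: u.
Proof.
move=> t0; elim: U => [|u U IH] Hnz Hk; first by exists [::]; rewrite /Pr !big_nil.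
have [||F [HF1 HF2]] := IH.
- by move=> v Hv; apply: Hnz; rewrite in_cons Hv orbT.
- by move=> v Hv; apply: Hk; rewrite in_cons Hv orbT.
have [k Hkk] := Hk u (mem_head _ _).
have du := Hnz u (mem_head _ _).
have tn : (t%:R : R) != 0 by rewrite pnatr_eq0 -lt0n.
exists (nseq k ((dotp u u * t%:R)^-1 *: u) ++ F); split.
  rewrite big_cat sum_nseq HF1 /Pr big_cons; congr (_ + _).
  rewrite linearZ /= linearZ /= -scalemxAl scalerA -scaler_nat scalerA; congr (_ *: _).
  rewrite Hkk; field; by apply/andP.
move=> f; rewrite mem_cat => /orP[|Hf].
  by move/nseqP => [-> _]; exists u => //; rewrite mem_head.
by have [v Hv ->] := HF2 f Hf; exists v => //; rewrite in_cons Hv orbT.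
Qed.

Lemma Fm_gram (R : realType) (n : nat) (F : seq 'rV[R]_n) :
  let Fm := \matrix_(c < size F) nth 0 F c in
  Fm^T *m Fm = \sum_(f <- F) f^T *m f.
Proof.
move=> Fm; apply/matrixP => a b; rewrite !mxE summxE.
rewrite (big_nth 0) big_mkord; apply: eq_bigr => c _.
by rewrite !mxE big_ord1 !mxE.
Qed.

Lemma Fm_coord (R : realType) (n : nat) (F : seq 'rV[R]_n) x (j : 'I_(size F)) :
  (x *m (\matrix_(c < size F) nth 0 F c)^T) 0 j = dotp x (nth 0 F j).
Proof. by rewrite dotpE mxE; apply: eq_bigr => i _; rewrite !mxE. Qed.

Theorem proposition2 (R : realType) (n : nat) (C : seq 'rV[R]_n) :
  spherical_code C ->
  (forall a, angle_set C a -> is_rational a) ->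
  spans C ->
  exists (q m : nat) (lam : R) (M : 'M[R]_(n, q)),
    [/\ (n <= q)%N, 0 < lam, isometric_embedding M &
        forall x, x \in C -> in_shell m (lam *: (x *m M))].
Proof.
move=> [uC Hsph] Hang Hsp.
have HQ : forall x y, x \in C -> y \in C -> isQ (dotp x y).
  move=> x y Hx Hy; case: (eqVneq x y) => [<-|nxy].
    by rewrite (Hsph x Hx); apply: isQ1.
  by apply: Hang; exists x, y; split.
have [U [Hnz Hor HQd HQc HP]] := @GS R n C HQ C (fun _ h => h).
have PU : Pr U = 1%:M := @span_id R n C _ Hsp HP.
have HQm : forall a, a \in map (fun u => dotp u u) U -> isQ a.
  by move=> a /mapP [u Hu ->]; apply: HQd.
have [t [t0 Ht]] := @denom R _ HQm.
have Hk : forall u, u \in U -> exists k : nat, k%:R = dotp u u * t%:R ^+ 2.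
  move=> u Hu; have [z Hz] := Ht _ (map_f _ Hu).
  have z0 : 0 <= z.
    rewrite -(ler0z R) -Hz mulr_ge0 // dotpE sumr_ge0 // => i _.
    by rewrite -expr2 sqr_ge0.
  exists (`|z|%N * t)%N; rewrite natrM natr_absz ger0_norm // -Hz.
  ring.
have [F [HF1 HF2]] := @buildF R n t U t0 Hnz Hk.
set Fm := \matrix_(c < size F) nth 0 F c.
set M : 'M[R]_(n, n + size F) := row_mx 0 Fm^T.
have MM : M *m M^T = 1%:M.
  by rewrite /M tr_row_mx mul_row_col mul0mx add0r trmxK Fm_gram HF1 PU.
have iso : isometric_embedding M.
  by move=> u v; rewrite dotp_mul MM mulmx1.
have HQa : forall a, a \in [seq dotp x f | x <- C, f <- F] -> isQ a.
  move=> a /allpairsP [[x f] [/= Hx Hf ->]].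
  have [u Hu ->] := HF2 f Hf.
  rewrite dotpZr; apply: isQM; last exact: HQc.
  apply: isQV; apply: isQM; first exact: HQd.
  by exists t%:R; rewrite ratr_nat.
have [D [D0 HD]] := @denom R _ HQa.
exists (n + size F)%N, (D * D)%N, D%:R, M; split.
- exact: leq_addr.
- by rewrite ltr0n.
- exact: iso.
move=> x Hx.
set v := D%:R *: (x *m M).
have Hent : forall c, exists z : int, v 0 c = z%:~R.
  move=> c; rewrite /v /M mul_mx_row mulmx0 scale_row_mx.
  rewrite -(splitK c); case: (split c) => j /=.
    by exists 0; rewrite row_mxEl !mxE mulr0.
  rewrite row_mxEr mxE Fm_coord; apply: HD.
  by apply: allpairs_f => //; rewrite mem_nth.
have [zf Hzf] := fin_all_exists Hent.
exists (\row_c zf c); split.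
  by apply/rowP => c; rewrite [in RHS]mxE [in RHS]mxE -Hzf.
apply: (@intr_inj R); rewrite rmorph_sum /=.
under eq_bigr do rewrite mxE rmorphXn /= -Hzf.
have -> : \sum_i v 0 i ^+ 2 = dotp v v.
  by rewrite dotpE; apply: eq_bigr => i _; rewrite expr2.
rewrite /v dotpZl dotpZr iso (Hsph x Hx) mulr1.
  by rewrite -natrM.
Qed.
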